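(* Let $\pi_n=\mathbb P(\Gamma\notin\mathcal T)$ for $\Gamma\in G(n,\tfrac12)$, let $f(n)=2n\sum_{i=0}^n\binom ni 2^{-n-\binom i2}$, let $t(n)$ be the number of graphs in $\mathcal T$ on the vertex set $\{1,\dots,n\}$, and let $c(n)$ be the total number of cliques (including the empty clique and single vertices) in all these $t(n)$ graphs. Then for every $n$: (1) $\pi_{2n}\le\pi_n^2+f(n)$; (2) $\pi_{2n}\le\pi_n^2+2\pi_n(1-\pi_n)\frac{n\,c(n)}{2^n t(n)}+(1-\pi_n)^2$; (3) $\pi_{n+1}\le\pi_n+f(n)$.
   Context: $G(n,p)$: random simplicial graphs on $n$ labelled vertices, each edge independently present with probability $p$. $\mathcal T$ is the smallest class of finite simplicial graphs containing $K_{2,2}$, closed under adding a new vertex adjacent exactly to the vertices of an induced subgraph which is not a clique, and closed under gluing two members along a common induced subgraph which is not a clique (optionally adding edges between vertices of the two non-shared parts). *)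

(* Defs.v *)
From HB Require Import structures.
From mathcomp Require Import all_boot all_order all_algebra.
From Stdlib Require Import ClassicalEpsilon.
Set Implicit Arguments. Unset Strict Implicit. Unset Printing Implicit Defensive.
Import GRing.Theory Num.Theory.

(* A simple graph on a finite vertex type V is represented by its edge set
   E : {set {set V}}, every edge being a 2-element set of vertices. *)
Definition is_graph (V : finType) (E : {set {set V}}) : bool :=
  [forall s in E, #|s| == 2].

Definition adj (V : finType) (E : {set {set V}}) (x y : V) : bool :=
  [set x; y] \in E.

Definition is_clique (V : finType) (E : {set {set V}}) (S : {set V}) : bool :=
  [forall x in S, forall y in S, (x != y) ==> adj E x y].

Definition induced (V : finType) (E : {set {set V}}) (A : {set V})
  : {set {set {x : V | x \in A}}} :=
  [set s : {set {x : V | x \in A}} | (val @: s) \in E].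

Definition img_graph (V W : finType) (f : V -> W) (E : {set {set V}})
  : {set {set W}} := [set f @: s | s : {set V} in E].

(* K_{2,2} on vertex set bool * bool: parts are {x | x.1 = false}, {x | x.1 = true}. *)
Definition K22 : {set {set (bool * bool)%type}} :=
  [set s : {set (bool * bool)%type} |
     [exists x : (bool * bool)%type, exists y : (bool * bool)%type,
        (s == [set x; y]) && (x.1 != y.1)]].

(* Add a new vertex (None) adjacent exactly to the vertices of S. *)
Definition cone (V : finType) (E : {set {set V}}) (S : {set V})
  : {set {set option V}} :=
  [set (@Some V) @: s | s : {set V} in E] :|: [set [set None; Some x] | x in S].

(* The class T (closed under isomorphism, as a class of graphs). *)
Inductive inT : forall V : finType, {set {set V}} -> Prop :=
| T_K22 : inT K22
| T_iso (V W : finType) (f : V -> W) (E : {set {set V}}) :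
    bijective f -> inT E -> inT (img_graph f E)
| T_cone (V : finType) (E : {set {set V}}) (S : {set V}) :
    inT E -> ~~ is_clique E S -> inT (cone E S)
| T_glue (V : finType) (E : {set {set V}}) (A B : {set V}) :
    is_graph E -> A :|: B = setT ->
    inT (induced E A) -> inT (induced E B) ->
    ~~ is_clique E (A :&: B) -> inT E.

(* Boolean version (classical) to allow counting. *)
Definition inTb (V : finType) (E : {set {set V}}) : bool :=
  if excluded_middle_informative (inT E) then true else false.

Definition graphs (n : nat) : {set {set {set 'I_n}}} :=
  [set E : {set {set 'I_n}} | is_graph E].

Definition Tgraphs (n : nat) : {set {set {set 'I_n}}} :=
  [set E in graphs n | inTb E].

Definition tcount (n : nat) : nat := #|Tgraphs n|.

Definition ccount (n : nat) : nat :=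
  \sum_(E in Tgraphs n) #|[set S : {set 'I_n} | is_clique E S]|.

(* pi_n = P(Gamma notin T) for Gamma in G(n,1/2), i.e. uniform on graphs n. *)
Definition pi_n (n : nat) : rat :=
  (#|[set E in graphs n | ~~ inTb E]|)%:R / (#|graphs n|)%:R.

Definition fn (n : nat) : rat :=
  (2 * n)%:R * \sum_(i < n.+1) ('C(n, i))%:R / ((2 ^ (n + 'C(i, 2)))%:R).

(* Main.v *)
Require Import Defs.
From HB Require Import structures.
From mathcomp Require Import all_boot all_order all_algebra.
Import GRing.Theory Num.Theory.
Set Implicit Arguments. Unset Strict Implicit. Unset Printing Implicit Defensive.


Definition pull (X V : finType) (i : X -> V) (E : {set {set V}}) : {set {set X}} :=
  [set s : {set X} | i @: s \in E].

Lemma induced_pull (V : finType) E (A : {set V}) : induced E A = pull val E.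
Proof. by []. Qed.

Lemma adjC (V : finType) (E : {set {set V}}) x y : adj E x y = adj E y x.
Proof. by rewrite /adj setUC. Qed.

Lemma adj_pull (X V : finType) (i : X -> V) E x y : adj (pull i E) x y = adj E (i x) (i y).
Proof. by rewrite /adj /pull inE imsetU1 imset_set1. Qed.

Lemma graph_pull (X V : finType) (i : X -> V) E :
  injective i -> is_graph E -> is_graph (pull i E).
Proof.
move=> ii /forallP gE; apply/forallP=> s; apply/implyP; rewrite inE => Hs.
by have := implyP (gE _) Hs; rewrite card_imset.
Qed.

Lemma graph_edge (V : finType) (E : {set {set V}}) s :
  is_graph E -> s \in E -> exists x y, x != y /\ s = [set x; y].
Proof. by move=> /forallP gE sE; apply/cards2P; exact: (implyP (gE s) sE). Qed.

Lemma cliqueP (V : finType) (E : {set {set V}}) (S : {set V}) :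
  reflect (forall x y, x \in S -> y \in S -> x != y -> adj E x y) (is_clique E S).
Proof.
apply: (iffP forall_inP) => [H x y xS yS xy | H x xS].
  exact: (implyP ((forall_inP (H x xS)) y yS) xy).
by apply/forall_inP => y yS; apply/implyP; exact: H.
Qed.

Lemma noncliqueP (V : finType) (E : {set {set V}}) (S : {set V}) :
  reflect (exists x y, [/\ x \in S, y \in S, x != y & ~~ adj E x y]) (~~ is_clique E S).
Proof.
apply: (iffP idP) => [nc | [x [y [xS yS xy nadj]]]]; last first.
  by apply/negP => /cliqueP H; rewrite H in nadj.
case: (pickP (fun p : V * V => [&& p.1 \in S, p.2 \in S, p.1 != p.2 & ~~ adj E p.1 p.2])).
  by move=> [x y] /and4P [xS yS xy na]; exists x, y.
move=> none; case/negP: nc; apply/cliqueP => x y xS yS xy.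
by have := none (x, y); rewrite /= xS yS xy /= => /negbFE.
Qed.

Lemma img_graph_eq (V W : finType) (f : V -> W) E1 E2 :
  injective f -> is_graph E1 -> is_graph E2 ->
  (forall x y, x != y -> adj E2 (f x) (f y) = adj E1 x y) ->
  (forall a, exists x, a = f x) -> E2 = img_graph f E1.
Proof.
move=> fi g1 g2 fa fs; apply/setP => s; apply/idP/idP.
  move=> sE; have [a [b [ab Hs]]] := graph_edge g2 sE; subst s.
  have [x Hx] := fs a; have [y Hy] := fs b; subst a b.
  have xy : x != y by apply: contraNneq ab => ->.
  have := fa x y xy; rewrite {1}/adj sE => /esym Hxy.
  by apply/imsetP; exists [set x; y]; rewrite // imsetU1 imset_set1.
case/imsetP => t tE ->; have [x [y [xy Ht]]] := graph_edge g1 tE; subst t.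
rewrite imsetU1 imset_set1; have := fa x y xy; rewrite /adj tE; by move->.
Qed.

Lemma inT_iso (V W : finType) (f : V -> W) E1 E2 :
  bijective f -> is_graph E1 -> is_graph E2 ->
  (forall x y, x != y -> adj E2 (f x) (f y) = adj E1 x y) -> inT E1 <-> inT E2.
Proof.
move=> fb g1 g2 fa; have fi := bij_inj fb; case: (fb) => g fK gK.
split => H.
  rewrite (img_graph_eq fi g1 g2 fa); last by move=> a; exists (g a).
  exact: T_iso.
have gi : injective g by apply: (can_inj gK).
have gb : bijective g by exists f.
rewrite (@img_graph_eq _ _ g E2 E1 gi g2 g1); first exact: T_iso.
  move=> a b ab; have gab : g a != g b.
    by rewrite (can_eq gK).
  by rewrite -(fa _ _ gab) !gK.
by move=> x; exists (f x); rewrite fK.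
Qed.


Lemma card_sigS (V : finType) (A : {set V}) : #|{: {x | x \in A}}| = #|A|.
Proof. by rewrite card_sig; apply: eq_card => x; rewrite !inE. Qed.

Lemma pull_canon (X V : finType) (i : X -> V) E :
  injective i -> is_graph E -> inT (pull i E) <-> inT (induced E (i @: setT)).
Proof.
move=> ii gE.
pose f := fun x : X => exist (fun v => v \in i @: setT) (i x) (imset_f i (in_setT x)).
have fi : injective f by move=> x y /(congr1 val) /= /ii.
apply: (@inT_iso _ _ f).
- apply: (@inj_card_bij _ _ f fi); rewrite card_sigS card_imset // cardsT //.
- exact: graph_pull.
- exact: graph_pull val_inj gE.
by move=> x y _; rewrite induced_pull !adj_pull.
Qed.

Lemma same_range (X Z V : finType) (i : X -> V) (j : Z -> V) E :
  injective i -> injective j -> is_graph E -> i @: setT = j @: setT ->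
  inT (pull i E) <-> inT (pull j E).
Proof.
by move=> ii ij gE R; rewrite (pull_canon ii gE) (pull_canon ij gE) R.
Qed.

Lemma pull_comp (X Y V : finType) (f : Y -> V) (g : X -> Y) E :
  pull g (pull f E) = pull (f \o g) E.
Proof. by apply/setP => s; rewrite !inE imset_comp. Qed.

Lemma pull_id (V : finType) (E : {set {set V}}) : pull id E = E.
Proof.
apply/setP => s; rewrite inE; congr (_ \in E).
by apply/setP => x; apply/imsetP/idP => [[y ys ->] | xs] //; exists x.
Qed.

Lemma adj_cone_SS (V : finType) (E : {set {set V}}) S x y :
  adj (cone E S) (Some x) (Some y) = adj E x y.
Proof.
rewrite /adj /cone inE.
have -> : [set Some x; Some y] \in [set [set None; Some z] | z in S] = false.
  apply/negP => /imsetP [z _ eq].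
  by have := setU11 None [set Some z]; rewrite -eq !inE.
have -> : [set Some x; Some y] = Some @: [set x; y] by rewrite imsetU1 imset_set1.
rewrite orbF; apply: mem_imset.
exact: imset_inj Some_inj.
Qed.

Lemma adj_cone_NS (V : finType) (E : {set {set V}}) S y :
  adj (cone E S) None (Some y) = (y \in S).
Proof.
rewrite /adj /cone inE.
have -> : [set None; Some y] \in [set (@Some V) @: s | s : {set V} in E] = false.
  apply/negP => /imsetP [s _ eq].
  by have := setU11 None [set Some y]; rewrite eq => /imsetP [].
rewrite /=; apply/imsetP/idP => [[z zS eq] | yS]; last by exists y.
have := setU1r None (set11 (Some y)); rewrite eq !inE /= => /eqP [->] //.
Qed.

Lemma graph_cone (V : finType) (E : {set {set V}}) S :
  is_graph E -> is_graph (cone E S).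
Proof.
move=> /forallP gE; apply/forallP => s; apply/implyP; rewrite inE.
case/orP => /imsetP [t tE ->].
  by rewrite card_imset; [exact: (implyP (gE t) tE) | exact: Some_inj].
by rewrite cards2.
Qed.

Lemma cone_step (V : finType) (E : {set {set V}}) (A : {set V}) v :
  is_graph E -> v \notin A -> inT (induced E A) ->
  ~~ is_clique E [set x in A | adj E v x] -> inT (induced E (v |: A)).
Proof.
move=> gE vA HA nc.
pose S := [set x : {x | x \in A} | adj E v (val x)].
have ncS : ~~ is_clique (induced E A) S.
  case/noncliqueP: nc => x [y [xS yS xy na]].
  move: xS yS; rewrite !inE => /andP [xA vx] /andP [yA vy].
  apply/noncliqueP; exists (exist _ x xA), (exist _ y yA).
  by rewrite !inE /= vx vy xy induced_pull adj_pull.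
have HT := T_cone HA ncS.
pose f := fun o : option {x | x \in A} =>
  match o with
  | None => exist (fun u => u \in v |: A) v (setU11 v A)
  | Some x => exist (fun u => u \in v |: A) (val x) (setU1r v (valP x)) end.
have fi : injective f.
  move=> [a|] [b|] // /(congr1 val) /=.
  - by move/val_inj ->.
  - by move=> eq; case/negP: vA; rewrite -eq; exact: (valP a).
  - by move=> eq; case/negP: vA; rewrite eq; exact: (valP b).
apply: (proj1 (@inT_iso _ _ f (cone (induced E A) S) (induced E (v |: A)) _ _ _ _)) HT.
- apply: (@inj_card_bij _ _ f fi).
  by rewrite card_option !card_sigS cardsU1 vA.
- by apply: graph_cone; exact: graph_pull val_inj gE.
- exact: graph_pull val_inj gE.
move=> [a|] [b|] // ab; rewrite induced_pull adj_pull /=.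
- by rewrite adj_cone_SS adj_pull.
- by rewrite adjC [in RHS]adjC adj_cone_NS inE.
- by rewrite adj_cone_NS inE.
Qed.

Lemma range_vv (V : finType) (C : {set V}) (B : {set {x | x \in C}}) :
  [set (val \o val) y | y in [set: {y | y \in B}]] = [set val x | x in B].
Proof.
apply/setP=> u; apply/imsetP/imsetP => [[y _ ->] | [x xB ->]].
  by exists (val y) => //; exact: (valP y).
by exists (exist _ x xB).
Qed.

Lemma range_sub (V : finType) (C : {set V}) (P : pred V) :
  [set val x | x in [set x : {x | x \in C} | P (val x)]] = [set u in C | P u].
Proof.
apply/setP=> u; rewrite inE; apply/imsetP/andP => [[x]|[uC Pu]].
  by rewrite inE => Px ->; split => //; exact: (valP x).
by exists (exist _ u uC); rewrite ?inE.
Qed.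

Lemma range_val (V : finType) (A : {set V}) : val @: [set: {x | x \in A}] = A.
Proof.
apply/setP => u; apply/imsetP/idP => [[x _ ->] | uA]; first exact: (valP x).
by exists (exist _ u uA).
Qed.

Lemma sub_in (V : finType) (C D : {set V}) : D \subset C -> [set u in C | u \in D] = D.
Proof.
move=> sDC; apply/setP => u; rewrite inE; apply/andP/idP => [[]//|uD].
by rewrite (subsetP sDC).
Qed.

Lemma extend (V : finType) (E : {set {set V}}) (A : {set V}) :
  is_graph E -> inT (induced E A) ->
  (forall v, v \notin A -> ~~ is_clique E [set x in A | adj E v x]) -> inT E.
Proof.
move=> gE HA Hn.
suff H : forall k (C : {set V}), A \subset C -> #|C :\: A| = k -> inT (induced E C).
  have H1 := H _ setT (subsetT A) erefl.
  have e : (@id V) @: setT = setT.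
    by apply/setP => x; rewrite inE; apply/imsetP; exists x.
  rewrite -(pull_id E); apply: (proj2 (@pull_canon _ _ id E (@inj_id V) gE)).
  by rewrite e.
elim=> [|k IH] C sAC hk.
  have : C :\: A == set0 by rewrite -cards_eq0 hk.
  rewrite setD_eq0 => sCA.
  by have -> : C = A by apply/eqP; rewrite eqEsubset sCA.
have : 0 < #|C :\: A| by rewrite hk.
rewrite card_gt0 => /set0Pn [v]; rewrite inE => /andP [vA vC].
set C' := C :\ v.
have sAC' : A \subset C'.
  apply/subsetP => x xA; rewrite in_setD1 (subsetP sAC) // andbT.
  by apply: contraNneq vA => <-.
have HC' : inT (induced E C').
  apply: IH sAC' _; move: hk; rewrite (cardsD1 v (C :\: A)) inE vA vC /=.
  rewrite add1n => -[<-]; apply: eq_card => x; rewrite !inE; by case: (x == v); case: (x \in A).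
pose A1 := [set x : {x | x \in C} | val x \in C'].
pose B1 := [set x : {x | x \in C} | val x \in v |: A].
have gC : is_graph (induced E C) by exact: graph_pull val_inj gE.
have vvi : forall (B : {set {x | x \in C}}),
    injective (val \o (val : {y | y \in B} -> _)).
  by move=> B x y /= /val_inj /val_inj.
apply: (@T_glue _ (induced E C) A1 B1 gC).
- apply/setP => x; rewrite !inE; have := valP x; rewrite /= => xC.
  by rewrite xC andbT; case: (val x == v).
- rewrite induced_pull pull_comp.
  apply: (proj1 (@same_range _ _ _ (val : {x | x \in C'} -> V) _ E val_inj (vvi _) gE _)) HC'.
  rewrite range_val range_vv range_sub sub_in //; exact: subD1set.
- rewrite induced_pull pull_comp.
  have HB : inT (induced E (v |: A)) by apply: cone_step => //; exact: Hn.
  apply: (proj1 (@same_range _ _ _ (val : {x | x \in v |: A} -> V) _ E val_inj (vvi _) gE _)) HB.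
  rewrite range_val range_vv range_sub sub_in //.
  by apply/subsetP => x; rewrite !inE => /orP [/eqP ->//|/(subsetP sAC)].
case/noncliqueP: (Hn v vA) => x [y [xS yS xy na]].
move: xS yS; rewrite !inE => /andP [xA _] /andP [yA _].
have xC := subsetP sAC x xA; have yC := subsetP sAC y yA.
apply/noncliqueP; exists (exist _ x xC), (exist _ y yC).
rewrite !inE /= induced_pull adj_pull /= xy na xA yA !orbT !andbT.
by split => //; apply/andP; split => //; [apply: contraNneq vA => <- | apply: contraNneq vA => <-].
Qed.


Lemma inT_noncomplete (V : finType) (E : {set {set V}}) :
  inT E -> exists x y : V, x != y /\ ~~ adj E x y.
Proof.
elim=> {V E} [ | V W f E fb _ [x [y [xy na]]] | V E S _ [x [y [xy na]]] nc
             | V E A B _ _ _ _ _ _ nc].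
- exists (false, false), (false, true); split => //.
  apply/negP; rewrite /adj inE => /existsP [x /existsP [y /andP [/eqP e ne]]].
  have : x \in [set (false, false); (false, true)] by rewrite e setU11.
  have : y \in [set (false, false); (false, true)] by rewrite e !inE eqxx orbT.
  by rewrite !inE => /orP [] /eqP yE /orP [] /eqP xE; rewrite xE yE in ne.
- have fi := bij_inj fb; exists (f x), (f y); split; first by rewrite (inj_eq fi).
  apply/negP; rewrite /adj /img_graph => /imsetP [s sE eq].
  have : f @: [set x; y] = f @: s by rewrite imsetU1 imset_set1.
  by move/(imset_inj fi) => es; rewrite /adj es sE in na.
- by exists (Some x), (Some y); rewrite adj_cone_SS.
case/noncliqueP: nc => x [y [_ _ xy na]]; by exists x, y.
Qed.

Section Decomp.
Variables (V X Y : finType) (i1 : X -> V) (i2 : Y -> V).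
Hypotheses (i1i : injective i1) (i2i : injective i2) (dis : forall x y, i1 x != i2 y)
  (cov : forall u, (exists x, u = i1 x) \/ (exists y, u = i2 y)).

Lemma struct (E : {set {set V}}) : is_graph E -> inT (pull i1 E) ->
  (forall y, ~~ is_clique (pull i1 E) [set x | adj E (i1 x) (i2 y)]) -> inT E.
Proof.
move=> gE H1 Hn.
apply: (@extend _ E (i1 @: setT) gE); first by apply/(pull_canon i1i gE).
move=> v vA; case: (cov v) => [[x ex]|[y ey]].
  by rewrite ex imset_f in vA.
subst v; case/noncliqueP: (Hn y) => x [x' [xS x'S xx' na]].
rewrite inE in xS; rewrite inE in x'S.
apply/noncliqueP; exists (i1 x), (i1 x').
rewrite !inE !imset_f // (inj_eq i1i) xx' -adj_pull na.
by rewrite adjC xS adjC x'S.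
Qed.

End Decomp.


Definition gV (T : finType) : {set {set {set T}}} := [set E : {set {set T}} | is_graph E].

Lemma card_setT (T : finType) : #|{: {set T}}| = 2 ^ #|T|.
Proof.
rewrite -[in RHS]cardsT -card_powerset; apply: eq_card => A.
by rewrite powersetE subsetT.
Qed.

Section Decomp2.
Variables (V X Y : finType) (i1 : X -> V) (i2 : Y -> V).
Hypotheses (i1i : injective i1) (i2i : injective i2) (dis : forall x y, i1 x != i2 y)
  (cov : forall u, (exists x, u = i1 x) \/ (exists y, u = i2 y)).

Definition cross (E : {set {set V}}) : {set X * Y} :=
  [set p : X * Y | [set i1 p.1; i2 p.2] \in E].

Definition Phi (E : {set {set V}}) := (pull i1 E, pull i2 E, cross E).

Definition build (t : ({set {set X}} * {set {set Y}}) * {set X * Y}) : {set {set V}} :=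
  [set i1 @: s | s : {set X} in t.1.1] :|: [set i2 @: s | s : {set Y} in t.1.2]
  :|: [set [set i1 p.1; i2 p.2] | p in t.2].

Definition target := setX (setX (gV X) (gV Y)) [set: {set X * Y}].

Lemma i2_notin1 y (s : {set X}) : (i2 y \in i1 @: s) = false.
Proof. by apply/negP => /imsetP [x _ e]; move: (dis x y); rewrite e eqxx. Qed.

Lemma i1_notin2 x (s : {set Y}) : (i1 x \in i2 @: s) = false.
Proof. by apply/negP => /imsetP [y _ e]; move: (dis x y); rewrite e eqxx. Qed.

Lemma build_Phi E : is_graph E -> build (Phi E) = E.
Proof.
move=> gE; apply/setP => s; apply/idP/idP.
  rewrite !inE => /orP [/orP [] |] /imsetP [t]; rewrite ?inE => tE -> //.
move=> sE; have [a [b [ab Hs]]] := graph_edge gE sE; subst s.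
rewrite !inE; move: sE ab; case: (cov a) => [[x ->]|[y ->]]; case: (cov b) => [[x' ->]|[y' ->]] => sE ab.
- apply/orP; left; apply/orP; left; apply/imsetP; exists [set x; x'].
    by rewrite /= inE imsetU1 imset_set1.
  by rewrite imsetU1 imset_set1.
- apply/orP; right; apply/imsetP; exists (x, y') => //; by rewrite /= inE.
- apply/orP; right; apply/imsetP; exists (x', y) => /=; last by rewrite setUC.
  by rewrite /= inE /= setUC.
- apply/orP; left; apply/orP; right; apply/imsetP; exists [set y; y'].
    by rewrite /= inE imsetU1 imset_set1.
  by rewrite imsetU1 imset_set1.
Qed.

Lemma graph_nonempty (T : finType) (E : {set {set T}}) s :
  is_graph E -> s \in E -> exists x, x \in s.
Proof. by move=> gE sE; have [x [y [_ ->]]] := graph_edge gE sE; exists x; exact: setU11. Qed.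

Lemma Phi_build t : t \in target -> Phi (build t) = t.
Proof.
case: t => [[G H] r]; rewrite !inE /= andbT => /andP [gG gH].
congr (_, _, _); apply/setP => s; rewrite !inE /=.
- rewrite mem_imset; last exact: imset_inj.
  have -> : (i1 @: s \in [set i2 @: s0 | s0 : {set Y} in H]) = false.
    apply/negP => /imsetP [u uH e]; have [y yu] := graph_nonempty gH uH.
    by have := imset_f i2 yu; rewrite -e i2_notin1.
  have -> : (i1 @: s \in [set [set i1 p.1; i2 p.2] | p in r]) = false.
    apply/negP => /imsetP [p _ e].
    by have := setU1r (i1 p.1) (set11 (i2 p.2)); rewrite -e i2_notin1.
  by rewrite /= !orbF.
- rewrite (mem_imset _ _ (imset_inj i2i)).
  have -> : (i2 @: s \in [set i1 @: s0 | s0 : {set X} in G]) = false.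
    apply/negP => /imsetP [u uG e]; have [x xu] := graph_nonempty gG uG.
    by have := imset_f i1 xu; rewrite -e i1_notin2.
  have -> : (i2 @: s \in [set [set i1 p.1; i2 p.2] | p in r]) = false.
    apply/negP => /imsetP [p _ e].
    by have := setU11 (i1 p.1) [set i2 p.2]; rewrite -e i1_notin2.
  by rewrite /= !orbF.
case: s => x y /=.
have -> : ([set i1 x; i2 y] \in [set i1 @: s0 | s0 : {set X} in G]) = false.
  apply/negP => /imsetP [u _ e].
  by have := setU1r (i1 x) (set11 (i2 y)); rewrite e i2_notin1.
have -> : ([set i1 x; i2 y] \in [set i2 @: s0 | s0 : {set Y} in H]) = false.
  apply/negP => /imsetP [u _ e].
  by have := setU11 (i1 x) [set i2 y]; rewrite e i1_notin2.
rewrite /=; apply/imsetP/idP => [[[x' y'] pr e] | xyr]; last by exists (x, y).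
have := setU11 (i1 x) [set i2 y]; rewrite e !inE /= (negbTE (dis _ _)) orbF.
move/eqP/i1i => ex; subst x'.
have := setU1r (i1 x) (set11 (i2 y)); rewrite e !inE /= eq_sym (negbTE (dis _ _)) /=.
by move/eqP/i2i => ey; subst y'.
Qed.

Lemma build_graph t : t \in target -> is_graph (build t).
Proof.
case: t => [[G H] r]; rewrite !inE /= andbT => /andP [/forallP gG /forallP gH].
apply/forallP => s; apply/implyP; rewrite !inE => /orP [/orP [] |] /imsetP [u uin ->].
- by rewrite card_imset //; exact: (implyP (gG u) uin).
- by rewrite card_imset //; exact: (implyP (gH u) uin).
by rewrite cards2 dis.
Qed.

Lemma count_decomp (Q : pred (({set {set X}} * {set {set Y}}) * {set X * Y})) :
  #|[set E in gV V | Q (Phi E)]| = #|[set t in target | Q t]|.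
Proof.
have inj : {in [set E in gV V | Q (Phi E)] &, injective Phi}.
  move=> E E'; rewrite !inE => /andP [gE _] /andP [gE' _] e.
  by rewrite -(build_Phi gE) e build_Phi.
rewrite -(card_in_imset inj); apply: eq_card => t; apply/imsetP/idP.
  move=> [E]; rewrite !inE => /andP [gE QE] ->; rewrite QE andbT.
  by rewrite /Phi /= !graph_pull.
rewrite inE => /andP [tT Qt]; exists (build t); last by rewrite Phi_build.
by rewrite !inE build_graph //= Phi_build.
Qed.

End Decomp2.


Lemma cardP (T : finType) (Q : pred T) : #|[set t | Q t]| = \sum_t (Q t : nat).
Proof.
rewrite -sum1_card big_mkcond /=; apply: eq_bigr => t _; rewrite inE.
by case: (Q t).
Qed.

Lemma union_bound (T I : finType) (Q : I -> pred T) :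
  #|[set t | [exists i, Q i t]]| <= \sum_i #|[set t | Q i t]|.
Proof.
rewrite cardP (eq_bigr (fun i => \sum_t (Q i t : nat))); last by move=> i _; rewrite cardP.
rewrite exchange_big /=; apply: leq_sum => t _.
case: existsP => [[i Hi] | _] //.
by rewrite (bigD1 i) //= Hi.
Qed.

Lemma card_pair (A B : finType) (Q : pred (A * B)) :
  #|[set p | Q p]| = \sum_a #|[set b | Q (a, b)]|.
Proof.
rewrite cardP (eq_bigr (fun a => \sum_b (Q (a, b) : nat))); last by move=> a _; rewrite cardP.
by rewrite pair_bigA /=; apply: eq_bigr => [[a b]] _.
Qed.

Definition colr (X Y : finType) (r : {set X * Y}) (y : Y) : {set X} := [set x | (x, y) \in r].

Lemma card_col (X Y : finType) (y : Y) (K : {set {set X}}) :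
  #|[set r : {set X * Y} | colr r y \in K]| = #|K| * 2 ^ (#|X| * #|Y| - #|X|).
Proof.
pose Z := [set p : X * Y | p.2 != y].
pose psi := fun r : {set X * Y} => (colr r y, r :&: Z).
have inj : injective psi.
  move=> r r' [e1 e2]; apply/setP => [[a b]].
  case: (b =P y) => [-> | nb].
    by move/setP/(_ a): e1; rewrite !inE.
  move/setP/(_ (a, b)): e2; rewrite !inE /=.
  by move/eqP: nb => /negbTE nb; rewrite nb /= !andbT.
have im : [set psi r | r in [set r : {set X * Y} | colr r y \in K]] = setX K (powerset Z).
  apply/setP => [[S W]]; rewrite !inE /=; apply/imsetP/andP.
    move=> [r]; rewrite inE => rK [-> ->]; split => //; exact: subsetIr.
  move=> [SK WZ].
  exists [set p : X * Y | if p.2 == y then p.1 \in S else p \in W].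
    rewrite inE; have -> // : colr [set p : X * Y | if p.2 == y then p.1 \in S else p \in W] y = S.
    by apply/setP => x; rewrite !inE eqxx.
  congr (_, _); apply/setP => p; rewrite !inE.
    by rewrite eqxx.
  case: (p.2 =P y) => [e | ne] /=; last by rewrite andbT.
  rewrite andbF; apply/negP => pW; have := subsetP WZ p pW; by rewrite inE e eqxx.
rewrite -(card_imset _ inj) im cardsX card_powerset.
congr (_ * 2 ^ _).
have eA : [set p : X * Y | p.2 == y] = (fun x => (x, y)) @: setT.
  apply/setP => [[a b]]; rewrite inE /=; apply/eqP/imsetP => [-> | [x _ [_ ->]]] //.
  by exists a.
have cA : #|[set p : X * Y | p.2 == y]| = #|X|.
  by rewrite eA card_imset ?cardsT // => a b [].
have := cardsC [set p : X * Y | p.2 == y]; rewrite cA card_prod.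
have -> : ~: [set p : X * Y | p.2 == y] = Z by apply/setP => p; rewrite !inE.
by move=> <-; rewrite addKn.
Qed.

Lemma gV_powerset (X : finType) : gV X = powerset [set s : {set X} | #|s| == 2].
Proof.
apply/setP => E; rewrite inE powersetE; apply/forall_inP/subsetP => H s sE.
  by rewrite inE; exact: H.
by have := H s sE; rewrite inE.
Qed.

Lemma clique_sub (X : finType) (G : {set {set X}}) (S : {set X}) :
  is_clique G S = ([set s : {set X} | s \subset S & #|s| == 2] \subset G).
Proof.
apply/cliqueP/subsetP => [H s | H x y xS yS xy].
  rewrite inE => /andP [sS /cards2P [a [b [ab es]]]]; subst s.
  apply: H => //; apply: (subsetP sS); rewrite !inE eqxx ?orbT //.
apply: H; rewrite inE cards2 xy andbT; apply/subsetP => z.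
by rewrite !inE => /orP [] /eqP ->.
Qed.

Lemma card_clique_graphs (X : finType) (S : {set X}) :
  #|[set G in gV X | is_clique G S]| * 2 ^ 'C(#|S|, 2) = #|gV X|.
Proof.
set U := [set s : {set X} | #|s| == 2].
set K := [set s : {set X} | s \subset S & #|s| == 2].
have KU : K \subset U by apply/subsetP => s; rewrite !inE => /andP [].
have cK : #|K| = 'C(#|S|, 2) by rewrite cards_draws.
have e : [set G in gV X | is_clique G S] = [set G in powerset U | K \subset G].
  apply/setP => G; rewrite inE [in RHS]inE clique_sub gV_powerset.
  by rewrite powersetE.
have inj : {in [set G in powerset U | K \subset G] &, injective (fun G => G :\: K)}.
  move=> G G'; rewrite !inE => /andP [_ KG] /andP [_ KG'] eq.
  apply/setP => s; case sK : (s \in K).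
    by rewrite (subsetP KG) ?(subsetP KG').
  by move/setP/(_ s): eq; rewrite !in_setD sK.
have im : [set G :\: K | G in [set G in powerset U | K \subset G]] = powerset (U :\: K).
  apply/setP => W; rewrite powersetE; apply/imsetP/idP.
    move=> [G]; rewrite !inE => /andP [GU _] ->.
    by apply/subsetP => s; rewrite !in_setD => /andP [-> /(subsetP GU)].
  move=> WUK; exists (W :|: K).
    rewrite !inE subsetUr andbT; apply/subsetP => s; rewrite in_setU.
    by case/orP => [/(subsetP WUK)|/(subsetP KU)] //; rewrite in_setD => /andP [].
  apply/setP => s; rewrite in_setD in_setU; case sK : (s \in K); rewrite ?orbT /=.
    by apply/negP => /(subsetP WUK); rewrite in_setD sK.
  by rewrite orbF.
rewrite e -(card_in_imset inj) im !card_powerset gV_powerset card_powerset.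
rewrite cardsDS // -cK -expnD subnK //; exact: subset_leq_card.
Qed.

From mathcomp Require Import zify.
From Stdlib Require Import ClassicalEpsilon.


Lemma inTbP (V : finType) (E : {set {set V}}) : reflect (inT E) (inTb E).
Proof. by rewrite /inTb; case: excluded_middle_informative => H; constructor. Qed.

Lemma card_U_le (T : finType) (A B : {set T}) : #|A :|: B| <= #|A| + #|B|.
Proof. by rewrite -cardsUI leq_addr. Qed.

Lemma card_cond (T : finType) (b : bool) (C : pred T) :
  #|[set t | b && C t]| = b * #|[set t | C t]|.
Proof.
case: b; first by rewrite mul1n; apply: eq_card => t; rewrite !inE.
by rewrite mul0n; apply/eqP; rewrite cards_eq0; apply/eqP/setP => t; rewrite !inE.
Qed.

Lemma sum_const_T (T : finType) (c : nat) : \sum_(y : T) c = #|T| * c.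
Proof. by rewrite sum_nat_const. Qed.

Section Decomp3.
Variables (V X Y : finType) (i1 : X -> V) (i2 : Y -> V).
Hypotheses (i1i : injective i1) (i2i : injective i2) (dis : forall x y, i1 x != i2 y)
  (cov : forall u, (exists x, u = i1 x) \/ (exists y, u = i2 y)).

Lemma count_prod (P1 : pred {set {set X}}) (P2 : pred {set {set Y}}) :
  #|[set E in gV V | P1 (pull i1 E) && P2 (pull i2 E)]| =
  #|[set G in gV X | P1 G]| * #|[set H in gV Y | P2 H]| * 2 ^ (#|X| * #|Y|).
Proof.
transitivity #|[set t in target X Y | P1 t.1.1 && P2 t.1.2]|.
  exact: (count_decomp i1i i2i dis cov (fun t => P1 t.1.1 && P2 t.1.2)).
have -> : [set t in target X Y | P1 t.1.1 && P2 t.1.2] =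
    setX (setX [set G in gV X | P1 G] [set H in gV Y | P2 H]) [set: {set X * Y}].
  apply/setP => [[[G H] r]]; rewrite !inE /= andbT.
  by case: (is_graph G); case: (is_graph H); case: (P1 G); case: (P2 H).
by rewrite !cardsX cardsT card_setT card_prod.
Qed.

Lemma count_bad (P1 : pred {set {set X}}) (P2 : pred {set {set Y}}) :
  #|[set E in gV V | P1 (pull i1 E) && P2 (pull i2 E) &&
     [exists y, is_clique (pull i1 E) [set x | adj E (i1 x) (i2 y)]]]| <=
  #|[set H in gV Y | P2 H]| * #|Y| *
    (\sum_(G in [set G in gV X | P1 G]) #|[set S | is_clique G S]|) *
    2 ^ (#|X| * #|Y| - #|X|).
Proof.
set Q := fun t : ({set {set X}} * {set {set Y}}) * {set X * Y} =>
  P1 t.1.1 && P2 t.1.2 && [exists y, is_clique t.1.1 (colr t.2 y)].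
have -> : #|[set E in gV V | P1 (pull i1 E) && P2 (pull i2 E) &&
     [exists y, is_clique (pull i1 E) [set x | adj E (i1 x) (i2 y)]]]| =
    #|[set E in gV V | Q (Phi i1 i2 E)]|.
  apply: eq_card => E; rewrite !inE /Q /=; congr (_ && (_ && _)).
  apply: eq_existsb => y; congr (is_clique _ _).
  by apply/setP => x; rewrite !inE.
rewrite (count_decomp i1i i2i dis cov Q).
set c := fun G : {set {set X}} => #|[set S | is_clique G S]|.
set k := 2 ^ (#|X| * #|Y| - #|X|).
have term : forall y,
    #|[set t | (t \in target X Y) && (P1 t.1.1 && P2 t.1.2 && is_clique t.1.1 (colr t.2 y))]|
    = #|[set H in gV Y | P2 H]| * (\sum_(G in [set G in gV X | P1 G]) c G) * k.
  move=> y; rewrite card_pair.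
  rewrite (eq_bigr (fun gh => ((gh.1 \in gV X) && P1 gh.1) * ((gh.2 \in gV Y) && P2 gh.2) * (c gh.1 * k))); last first.
    move=> [G H] _ /=.
    have -> : #|[set b | ((G, H, b) \in target X Y) && (P1 (G, H, b).1.1 && P2 (G, H, b).1.2 && is_clique (G, H, b).1.1 (colr (G, H, b).2 y))]|
      = #|[set b | ((G \in gV X) && P1 G && (H \in gV Y) && P2 H) && (colr b y \in [set S | is_clique G S])]|.
      apply: eq_card => b; rewrite !inE /=.
      by case: (is_graph G); case: (is_graph H); case: (P1 G); case: (P2 H).
    rewrite card_cond card_col.
    by case: (G \in gV X); case: (P1 G); case: (H \in gV Y); case: (P2 H).
  rewrite -(pair_bigA _ (fun G H => ((G \in gV X) && P1 G) * ((H \in gV Y) && P2 H) * (c G * k))) /=.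
  have -> : \sum_i \sum_j ((i \in gV X) && P1 i) * ((j \in gV Y) && P2 j) * (c i * k)
      = \sum_i (((i \in gV X) && P1 i) * (c i * k)) * \sum_j ((j \in gV Y) && P2 j).
    apply: eq_bigr => G _; rewrite big_distrr /=; apply: eq_bigr => H _.
    by rewrite mulnAC.
  rewrite -big_distrl /= -(cardP (fun H => (H \in gV Y) && P2 H)).
  have -> : \sum_i ((i \in gV X) && P1 i) * (c i * k) = (\sum_(G in [set G in gV X | P1 G]) c G) * k.
    rewrite big_distrl /= [in RHS]big_mkcond /=; apply: eq_bigr => G _; rewrite [in RHS]inE.
    by case: ((G \in gV X) && P1 G); rewrite ?mul1n ?mul0n.
  have -> : [set t | (t \in gV Y) && P2 t] = [set H in gV Y | P2 H] by [].
  by rewrite [in LHS]mulnC mulnA.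
apply: (@leq_trans (\sum_y #|[set t | (t \in target X Y) && (P1 t.1.1 && P2 t.1.2 && is_clique t.1.1 (colr t.2 y))]|)).
  apply: leq_trans (union_bound _); apply: subset_leq_card; apply/subsetP => t.
  rewrite !inE /Q => /andP [tT /andP [/andP [p1 p2] /existsP [y cl]]].
  by apply/existsP; exists y; rewrite tT p1 p2 cl.
rewrite (eq_bigr _ (fun y _ => term y)) sum_const_T.
rewrite /c; set N := #|_|; set S := \sum_(G in _) _; set Y0 := #|Y|.
by rewrite !mulnA [Y0 * N]mulnC.
Qed.


Lemma bad_exists (E : {set {set V}}) : E \in gV V -> ~~ inTb E -> inTb (pull i1 E) ->
  [exists y, is_clique (pull i1 E) [set x | adj E (i1 x) (i2 y)]].
Proof.
rewrite inE => gE nT T1; case: (boolP [exists y, _]) => // /existsPn H.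
case/negP: nT; apply/inTbP; apply: (struct i1i cov gE) => //; exact/inTbP.
Qed.

End Decomp3.

Definition bad (V : finType) := #|[set E in gV V | ~~ inTb E]|.

Section Decomp4.
Variables (V X Y : finType) (i1 : X -> V) (i2 : Y -> V).
Hypotheses (i1i : injective i1) (i2i : injective i2) (dis : forall x y, i1 x != i2 y)
  (cov : forall u, (exists x, u = i1 x) \/ (exists y, u = i2 y)).

Let dis' : forall y x, i2 y != i1 x. Proof. by move=> y x; rewrite eq_sym. Qed.
Let cov' : forall u, (exists y, u = i2 y) \/ (exists x, u = i1 x).
Proof. by move=> u; case: (cov u); [right | left]. Qed.

Lemma bound_A : bad V <=
  #|[set E in gV V | ~~ inTb (pull i1 E) && ~~ inTb (pull i2 E)]|
  + #|[set E in gV V | inTb (pull i1 E) && true &&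
        [exists y, is_clique (pull i1 E) [set x | adj E (i1 x) (i2 y)]]]|
  + #|[set E in gV V | inTb (pull i2 E) && true &&
        [exists x, is_clique (pull i2 E) [set y | adj E (i2 y) (i1 x)]]]|.
Proof.
apply: leq_trans (leq_add (card_U_le _ _) (leqnn _)) ; apply: leq_trans (card_U_le _ _).
apply: subset_leq_card; apply/subsetP => E; rewrite inE => /andP [gE nT].
have gE' : E \in gV V by [].
rewrite !in_setU.
case T1 : (inTb (pull i1 E)).
  by rewrite [X in _ || X || _]inE gE' T1 (bad_exists i1i cov) ?orbT.
case T2 : (inTb (pull i2 E)).
  by rewrite [X in _ || X]inE gE' T2 (bad_exists i2i cov') ?orbT.
by rewrite [X in X || _ || _]inE gE' T1 T2.
Qed.

Lemma bound_B : bad V <=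
  #|[set E in gV V | ~~ inTb (pull i1 E) && ~~ inTb (pull i2 E)]|
  + #|[set E in gV V | inTb (pull i1 E) && ~~ inTb (pull i2 E) &&
        [exists y, is_clique (pull i1 E) [set x | adj E (i1 x) (i2 y)]]]|
  + #|[set E in gV V | inTb (pull i2 E) && ~~ inTb (pull i1 E) &&
        [exists x, is_clique (pull i2 E) [set y | adj E (i2 y) (i1 x)]]]|
  + #|[set E in gV V | inTb (pull i1 E) && inTb (pull i2 E)]|.
Proof.
apply: leq_trans (leq_add (leq_add (card_U_le _ _) (leqnn _)) (leqnn _)).
apply: leq_trans (leq_add (card_U_le _ _) (leqnn _)); apply: leq_trans (card_U_le _ _).
apply: subset_leq_card; apply/subsetP => E; rewrite inE => /andP [gE nT].
have gE' : E \in gV V by [].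
rewrite !in_setU.
case T1 : (inTb (pull i1 E)); case T2 : (inTb (pull i2 E)).
- by rewrite [X in _ || X]inE gE' T1 T2 ?orbT.
- by rewrite [X in _ || X || _ || _]inE gE' T1 T2 (bad_exists i1i cov) ?orbT.
- by rewrite [X in _ || X || _]inE gE' T1 T2 (bad_exists i2i cov') ?orbT.
by rewrite [X in X || _ || _ || _]inE gE' T1 T2.
Qed.

Lemma bound_C : bad V <=
  #|[set E in gV V | ~~ inTb (pull i1 E) && true]|
  + #|[set E in gV V | inTb (pull i1 E) && true &&
        [exists y, is_clique (pull i1 E) [set x | adj E (i1 x) (i2 y)]]]|.
Proof.
apply: leq_trans (card_U_le _ _).
apply: subset_leq_card; apply/subsetP => E; rewrite inE => /andP [gE nT].
have gE' : E \in gV V by [].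
rewrite !in_setU.
case T1 : (inTb (pull i1 E)).
  by rewrite [X in _ || X]inE gE' T1 (bad_exists i1i cov) ?orbT.
by rewrite [X in X || _]inE gE' T1.
Qed.

End Decomp4.

From mathcomp Require Import ring lra.


Lemma sum_sub_le (T : finType) (A B : {set T}) (f : T -> nat) :
  A \subset B -> \sum_(t in A) f t <= \sum_(t in B) f t.
Proof.
move=> sAB; rewrite [X in X <= _]big_mkcond [X in _ <= X]big_mkcond /=.
apply: leq_sum => t _; case tA : (t \in A) => //.
by rewrite (subsetP sAB t tA).
Qed.

Lemma clique_exchange (X : finType) :
  \sum_(G in gV X) #|[set S | is_clique G S]| =
  \sum_(S : {set X}) #|[set G in gV X | is_clique G S]|.
Proof.
rewrite (eq_bigr (fun G => \sum_S (is_clique G S : nat))); last by move=> G _; rewrite cardP.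
rewrite exchange_big /=; apply: eq_bigr => S _.
by rewrite -sum1_card [RHS]big_mkcond [LHS]big_mkcond /=; apply: eq_bigr => G _; rewrite !inE; case: (is_graph G); case: (is_clique G S).
Qed.

Local Open Scope ring_scope.

Lemma sum_by_card (X : finType) (F : nat -> rat) :
  \sum_(S : {set X}) F #|S| = \sum_(i < #|X|.+1) ('C(#|X|, i))%:R * F i.
Proof.
rewrite (partition_big (fun S : {set X} => (inord #|S| : 'I_(#|X|.+1))) xpredT) //=.
apply: eq_bigr => i _.
have e : forall S : {set X}, (inord #|S| == i :> 'I_(#|X|.+1)) = (#|S| == i).
  move=> S; rewrite -val_eqE /= inordK // ltnS; exact: max_card.
rewrite (eq_bigl (fun S : {set X} => #|S| == i)); last by move=> S; rewrite e.
rewrite (eq_bigr (fun _ => F i)); last by move=> S /eqP ->.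
rewrite sumr_const -card_draws [RHS]mulrC mulr_natr; congr (_ *+ _).
by apply: eq_card => S; rewrite inE.
Qed.

Lemma gV_pos (X : finType) : (0 < #|gV X|)%N.
Proof.
rewrite card_gt0; apply/set0Pn; exists set0; rewrite inE.
by apply/forall_inP => s; rewrite inE.
Qed.

Lemma clique_sum (X : finType) :
  (\sum_(G in gV X) #|[set S | is_clique G S]|)%:R =
  (#|gV X|)%:R * \sum_(i < #|X|.+1) ('C(#|X|, i))%:R / (2 ^ 'C(i, 2))%:R :> rat.
Proof.
rewrite clique_exchange natr_sum.
rewrite (eq_bigr (fun S : {set X} => (#|gV X|)%:R / (2 ^ 'C(#|S|, 2))%:R)); last first.
  move=> S _; rewrite -(card_clique_graphs S) natrM mulfK //.
  by rewrite pnatr_eq0 expn_eq0.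
rewrite (@sum_by_card X (fun i => (#|gV X|)%:R / (2 ^ 'C(i, 2))%:R)) big_distrr /=.
by apply: eq_bigr => i _; rewrite !mulrA [_ * #|gV X|%:R]mulrC.
Qed.

Import Order.TTheory.


Section Concrete.
Variable n : nat.

Lemma lft_lt (x : 'I_n) : (x < 2 * n)%N. Proof. have := ltn_ord x; lia. Qed.
Lemma rgt_lt (x : 'I_n) : (n + x < 2 * n)%N. Proof. have := ltn_ord x; lia. Qed.
Definition lft (x : 'I_n) : 'I_(2 * n) := Ordinal (lft_lt x).
Definition rgt (x : 'I_n) : 'I_(2 * n) := Ordinal (rgt_lt x).
Lemma lft_inj : injective lft.
Proof. by move=> x y /(congr1 val) /= e; apply: val_inj. Qed.
Lemma rgt_inj : injective rgt.
Proof. by move=> x y /(congr1 val) /= e; apply: val_inj => /=; lia. Qed.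
Lemma lr_dis x y : lft x != rgt y.
Proof. apply/eqP => /(congr1 val) /=; have := ltn_ord x; lia. Qed.
Lemma lr_cov u : (exists x, u = lft x) \/ (exists y, u = rgt y).
Proof.
case: (ltnP u n) => h; first by left; exists (Ordinal h); apply: val_inj.
have h' : (u - n < n)%N by have := ltn_ord u; lia.
by right; exists (Ordinal h'); apply: val_inj => /=; lia.
Qed.

Lemma low_lt (x : 'I_n) : (x < n.+1)%N. Proof. have := ltn_ord x; lia. Qed.
Definition low (x : 'I_n) : 'I_n.+1 := Ordinal (low_lt x).
Definition top (y : 'I_1) : 'I_n.+1 := ord_max.
Lemma low_inj : injective low.
Proof. by move=> x y /(congr1 val) /= e; apply: val_inj. Qed.
Lemma top_inj : injective top.
Proof. by move=> [[|x] hx] [[|y] hy] // _; apply: val_inj. Qed.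
Lemma lt_dis x y : low x != top y.
Proof. apply/eqP => /(congr1 val) /=; have := ltn_ord x; lia. Qed.
Lemma lt_cov u : (exists x, u = low x) \/ (exists y, u = top y).
Proof.
case: (ltnP u n) => h; first by left; exists (Ordinal h); apply: val_inj.
right; exists ord0; apply: val_inj => /=; have := ltn_ord u; lia.
Qed.

Lemma rl_dis y x : rgt y != lft x. Proof. by rewrite eq_sym lr_dis. Qed.
Lemma rl_cov u : (exists y, u = rgt y) \/ (exists x, u = lft x).
Proof. by case: (lr_cov u); [right|left]. Qed.

End Concrete.

Lemma card_split (X : finType) (P : pred {set {set X}}) :
  (#|[set G in gV X | P G]| + #|[set G in gV X | ~~ P G]| = #|gV X|)%N.
Proof.
rewrite -(cardsID [set G | P G] (gV X)); congr (_ + _)%N; apply: eq_card => G;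
  by rewrite !inE andbC.
Qed.

Lemma gV_all (X : finType) : #|[set G in gV X | true]| = #|gV X|.
Proof. by apply: eq_card => G; rewrite !inE andbT. Qed.

Lemma gV_all2 (V X Y : finType) (i1 : X -> V) (i2 : Y -> V) :
  #|[set E in gV V | (fun _ => true) (pull i1 E) && (fun _ => true) (pull i2 E)]| = #|gV V|.
Proof. by apply: eq_card => G; rewrite !inE /= andbT. Qed.

Definition Call (X : finType) := (\sum_(G in gV X) #|[set S | is_clique G S]|)%N.
Definition CT (X : finType) := (\sum_(G in [set G in gV X | inTb G]) #|[set S | is_clique G S]|)%N.

Lemma CT_le (X : finType) : (CT X <= Call X)%N.
Proof. by apply: sum_sub_le; apply/subsetP => G; rewrite inE => /andP []. Qed.

Lemma k_mul n : (2 ^ (n * n - n) * 2 ^ n = 2 ^ (n * n))%N.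
Proof. rewrite -expnD subnK //; case: n => // n; by rewrite leq_pmulr. Qed.

Lemma nat1 (n : nat) : (#|'I_n| = n)%N. Proof. exact: card_ord. Qed.

Local Open Scope ring_scope.

Lemma piE m : pi_n m = (bad 'I_m)%:R / (#|gV 'I_m|)%:R.
Proof. by []. Qed.

Lemma part1 n : pi_n (2 * n) <= pi_n n ^+ 2 + fn n.
Proof.
have hA := bound_A (@lft_inj n) (@rgt_inj n) (@lr_cov n).
have eA := count_prod (@lft_inj n) (@rgt_inj n) (@lr_dis n) (@lr_cov n)
  (fun G => ~~ inTb G) (fun G => ~~ inTb G).
have eB := count_bad (@lft_inj n) (@rgt_inj n) (@lr_dis n) (@lr_cov n) (fun G => inTb G) (fun _ => true).
have eC := count_bad (@rgt_inj n) (@lft_inj n) (@rl_dis n) (@rl_cov n) (fun G => inTb G) (fun _ => true).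
move: hA; rewrite eA => hA.
move: eB eC; rewrite gV_all card_ord => eB eC.
have hN := leq_trans hA (leq_add (leq_add (leqnn _) eB) eC).
have eD : #|gV 'I_(2 * n)| = (#|gV 'I_n| * #|gV 'I_n| * 2 ^ (n * n))%N.
  have := count_prod (@lft_inj n) (@rgt_inj n) (@lr_dis n) (@lr_cov n) (fun _ => true) (fun _ => true).
  rewrite !gV_all card_ord => <-; apply: eq_card => E; by rewrite !inE /= ?andbT.
have hC := CT_le 'I_n.
set N := #|gV 'I_n| in eD hN *.
set a := #|[set G in gV 'I_n | ~~ inTb G]| in hN *.
set k := (2 ^ (n * n - n))%N in hN *.
set c := (\sum_(G in _) _)%N in hN hC.
have hNr : (bad 'I_(2 * n))%:R <= (a * a * (k * 2 ^ n) + 2 * (N * n * Call 'I_n * k))%:R :> rat.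
  rewrite ler_nat; apply: leq_trans hN _; rewrite card_ord -(k_mul n) -/k.
  rewrite -addnA leq_add2l addnn -mul2n leq_mul2l /=.
  exact: leq_mul (leq_mul (leqnn _) hC) (leqnn k).
set s := \sum_(i < n.+1) ('C(n, i))%:R / (2 ^ 'C(i, 2))%:R : rat.
have Hs : (Call 'I_n)%:R = N%:R * s.
  by rewrite /Call clique_sum card_ord.
have Hf : fn n = (2 * n)%:R * s / (2 ^ n)%:R.
  rewrite /fn -mulrA; congr (_ * _); rewrite /s big_distrl /=; apply: eq_bigr => i _.
  by rewrite expnD natrM invfM !mulrA mulrAC.
have N0 : N%:R != 0 :> rat by rewrite pnatr_eq0 -lt0n gV_pos.
have P0 : (2 ^ n)%:R != 0 :> rat by rewrite pnatr_eq0 expn_eq0.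
have k0 : k%:R != 0 :> rat by rewrite pnatr_eq0 expn_eq0.
rewrite piE piE eD -k_mul -/k Hf.
have Dpos : 0 < (N * N * (k * 2 ^ n))%:R :> rat.
  by rewrite ltr0n !muln_gt0 gV_pos !expn_gt0.
rewrite ler_pdivrMr //; apply: le_trans hNr _.
rewrite !natrD !natrM Hs.
have -> : (bad 'I_n)%:R = a%:R :> rat by [].
have -> : (#|gV 'I_n|)%:R = N%:R :> rat by [].
rewrite le_eqVlt; apply/orP; left; apply/eqP; field.
by rewrite P0 N0.
Qed.

Lemma split_at (X : finType) :
  (#|[set G in gV X | ~~ inTb G]| + #|[set G in gV X | inTb G]| = #|gV X|)%N.
Proof. by rewrite addnC (card_split (fun G => inTb G)). Qed.

Lemma part2 n : pi_n (2 * n) <= pi_n n ^+ 2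
        + 2%:R * pi_n n * (1 - pi_n n)
            * ((n * ccount n)%:R / ((2 ^ n * tcount n)%:R))
        + (1 - pi_n n) ^+ 2.
Proof.
have hB := bound_B (@lft_inj n) (@rgt_inj n) (@lr_cov n).
have eA := count_prod (@lft_inj n) (@rgt_inj n) (@lr_dis n) (@lr_cov n)
  (fun G => ~~ inTb G) (fun G => ~~ inTb G).
have eT := count_prod (@lft_inj n) (@rgt_inj n) (@lr_dis n) (@lr_cov n)
  (fun G => inTb G) (fun G => inTb G).
have eB := count_bad (@lft_inj n) (@rgt_inj n) (@lr_dis n) (@lr_cov n) (fun G => inTb G) (fun G => ~~ inTb G).
have eC := count_bad (@rgt_inj n) (@lft_inj n) (@rl_dis n) (@rl_cov n) (fun G => inTb G) (fun G => ~~ inTb G).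
move: hB; rewrite eA eT => hB.
have hN := leq_trans hB (leq_add (leq_add (leq_add (leqnn _) eB) eC) (leqnn _)).
have eD : #|gV 'I_(2 * n)| = (#|gV 'I_n| * #|gV 'I_n| * 2 ^ (n * n))%N.
  have := count_prod (@lft_inj n) (@rgt_inj n) (@lr_dis n) (@lr_cov n) (fun _ => true) (fun _ => true).
  rewrite !gV_all card_ord => <-; apply: eq_card => E; by rewrite !inE /= ?andbT.
have hsp := split_at 'I_n.
rewrite card_ord -(k_mul n) in hN.
set N := #|gV 'I_n| in eD hN hsp *.
set a := #|[set G in gV 'I_n | ~~ inTb G]| in hN hsp *.
set t := #|[set G in gV 'I_n | inTb G]| in hN hsp *.
set k := (2 ^ (n * n - n))%N in hN *.
set c := (\sum_(G in _) _)%N in hN.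
have -> : ccount n = c by [].
have -> : tcount n = t by [].
have hNr : (bad 'I_(2 * n))%:R <= (a * a * (k * 2 ^ n) + 2 * (a * n * c * k) + t * t * (k * 2 ^ n))%:R :> rat.
  by rewrite ler_nat; apply: leq_trans hN _; lia.
have N0 : N%:R != 0 :> rat by rewrite pnatr_eq0 -lt0n gV_pos.
have P0 : (2 ^ n)%:R != 0 :> rat by rewrite pnatr_eq0 expn_eq0.
have k0 : k%:R != 0 :> rat by rewrite pnatr_eq0 expn_eq0.
rewrite piE piE eD -k_mul -/k.
have -> : (bad 'I_n)%:R = a%:R :> rat by [].
have -> : (#|gV 'I_n|)%:R = N%:R :> rat by [].
have Ht : 1 - a%:R / N%:R = t%:R / N%:R :> rat.
  by rewrite -hsp natrD; field; rewrite -natrD hsp.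
rewrite Ht.
have Dpos : 0 < (N * N * (k * 2 ^ n))%:R :> rat.
  by rewrite ltr0n !muln_gt0 gV_pos !expn_gt0.
rewrite ler_pdivrMr //; apply: le_trans hNr _.
case: (posnP t) => [t0 | tpos].
  have c0 : c = 0%N.
    apply/eqP; rewrite sum_nat_eq0; apply/forall_inP => G GT.
    by move/eqP: t0; rewrite /t cards_eq0 => /eqP e; rewrite e inE in GT.
  rewrite t0 c0 !muln0 !mul0n !addn0 !natrM !mul0r.
  rewrite le_eqVlt; apply/orP; left; apply/eqP; field.
  by rewrite ?P0 ?N0.
have t0 : t%:R != 0 :> rat by rewrite pnatr_eq0 -lt0n.
rewrite !natrD !natrM.
rewrite le_eqVlt; apply/orP; left; apply/eqP; field.
by rewrite ?t0 ?P0 ?N0.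
Qed.

Lemma pi_le1 m : pi_n m <= 1.
Proof.
rewrite piE ler_pdivrMr ?ltr0n ?gV_pos // mul1r ler_nat.
by apply: subset_leq_card; apply/subsetP => E; rewrite inE => /andP [].
Qed.

Lemma pi0 : pi_n 0 = 1.
Proof.
rewrite piE.
have -> : bad 'I_0 = #|gV 'I_0|.
  apply: eq_card => E; rewrite !inE andbC; case gE : (is_graph E); rewrite ?andbF ?andbT //.
  apply/negP => /inTbP H; have [[x hx] _] := inT_noncomplete H; by [].
by rewrite divff // pnatr_eq0 -lt0n gV_pos.
Qed.

Lemma part3 n : pi_n n.+1 <= pi_n n + fn n.
Proof.
case: n => [|n]; first by rewrite pi0 /fn mul0r addr0 pi_le1.
set m := n.+1.
have hC := bound_C (@low_inj m) (@lt_cov m).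
have e1 := count_prod (@low_inj m) (@top_inj m) (@lt_dis m) (@lt_cov m)
  (fun G => ~~ inTb G) (fun _ => true).
have e2 := count_bad (@low_inj m) (@top_inj m) (@lt_dis m) (@lt_cov m) (fun G => inTb G) (fun _ => true).
have eD : #|gV 'I_m.+1| = (#|gV 'I_m| * #|gV 'I_1| * 2 ^ m)%N.
  have := count_prod (@low_inj m) (@top_inj m) (@lt_dis m) (@lt_cov m) (fun _ => true) (fun _ => true).
  rewrite !gV_all !card_ord muln1 => <-; apply: eq_card => E; by rewrite !inE /= ?andbT.
move: hC; rewrite e1 => hC.
have hN := leq_trans hC (leq_add (leqnn _) e2).
rewrite !gV_all !card_ord muln1 subnn expn0 muln1 in hN.
have hCT := CT_le 'I_m.
set N := #|gV 'I_m| in eD hN *.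
set N1 := #|gV 'I_1| in eD hN *.
set a := #|[set G in gV 'I_m | ~~ inTb G]| in hN *.
set c := (\sum_(G in _) _)%N in hN hCT.
have hNr : (bad 'I_m.+1)%:R <= (a * N1 * 2 ^ m + N1 * Call 'I_m)%:R :> rat.
  rewrite ler_nat; apply: leq_trans hN _; rewrite muln1 leq_add2l leq_mul2l hCT orbT //.
set s := \sum_(i < m.+1) ('C(m, i))%:R / (2 ^ 'C(i, 2))%:R : rat.
have Hs : (Call 'I_m)%:R = N%:R * s.
  by rewrite /Call clique_sum card_ord.
have Hf : fn m = (2 * m)%:R * s / (2 ^ m)%:R.
  rewrite /fn -mulrA; congr (_ * _); rewrite /s big_distrl /=; apply: eq_bigr => i _.
  by rewrite expnD natrM invfM !mulrA mulrAC.
have s0 : 0 <= s by apply: sumr_ge0 => i _; rewrite divr_ge0 ?ler0n.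
have N0 : N%:R != 0 :> rat by rewrite pnatr_eq0 -lt0n gV_pos.
have N10 : N1%:R != 0 :> rat by rewrite pnatr_eq0 -lt0n gV_pos.
have P0 : (2 ^ m)%:R != 0 :> rat by rewrite pnatr_eq0 expn_eq0.
rewrite piE piE eD.
have -> : (bad 'I_m)%:R = a%:R :> rat by [].
have -> : (#|gV 'I_m|)%:R = N%:R :> rat by [].
have Dpos : 0 < (N * N1 * 2 ^ m)%:R :> rat.
  by rewrite ltr0n !muln_gt0 !gV_pos expn_gt0.
rewrite ler_pdivrMr //; apply: le_trans hNr _.
rewrite natrD !natrM Hs Hf.
have -> : (a%:R * N1%:R * (2 ^ m)%:R + N1%:R * (N%:R * s)) =
   (a%:R / N%:R + s / (2 ^ m)%:R) * (N%:R * N1%:R * (2 ^ m)%:R) :> rat.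
  by field; rewrite P0 N0.
rewrite ler_pM2r; last by rewrite !mulr_gt0 // lt0r ?N0 ?N10 ?P0 ?ler0n.
rewrite lerD2l ler_pM2r; last by rewrite invr_gt0 lt0r P0 ler0n.
rewrite -[X in X <= _]mul1r ler_wpM2r // ler1n muln_gt0 //.
Qed.

Theorem lemma3p11 (n : nat) :
  [/\ pi_n (2 * n) <= pi_n n ^+ 2 + fn n,
      pi_n (2 * n) <= pi_n n ^+ 2
        + 2%:R * pi_n n * (1 - pi_n n)
            * ((n * ccount n)%:R / ((2 ^ n * tcount n)%:R))
        + (1 - pi_n n) ^+ 2
    & pi_n n.+1 <= pi_n n + fn n].
Proof. by split; [exact: part1 | exact: part2 | exact: part3]. Qed.
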